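(* Let $\mathcal{P}$ be a (weakly connected) collection of cells whose connected components are $\mathcal{P}_1,\dots,\mathcal{P}_n$. For each $i$ let $\tilde{r}_{\mathcal{P}_i}(t)$ be the switching rook polynomial of $\mathcal{P}_i$. Then $\prod_{i=1}^n \tilde{r}_{\mathcal{P}_i}(t)$ is the switching rook polynomial of $\mathcal{P}$.
   Context: For $a=(a_1,a_2)\le b=(b_1,b_2)$ in $\mathbb{Z}^2$ (componentwise order), the interval $[a,b]$ is $\{(m,n)\in\mathbb{Z}^2: a_1\le m\le b_1,\ a_2\le n\le b_2\}$; it is proper if $a_1<b_1$ and $a_2<b_2$. A cell is a proper interval $[a,a+(1,1)]$, with lower left corner $a$; its vertices are its four points. A collection of cells is a finite non-empty set $\mathcal{P}$ of cells; it is weakly connected if any two of its cells are joined by a sequence of cells of $\mathcal{P}$ in which consecutive cells share a vertex (throughout, ''collection of cells'' means a weakly connected one). A path in $\mathcal{P}$ is a sequence of distinct cells of $\mathcal{P}$, consecutive ones sharing an edge; a polyomino is a collection of cells in which any two cells are joined by a path; a connected component of $\mathcal{P}$ is a subset which is a polyomino and is maximal with this property. An inner interval of $\mathcal{P}$ is a proper interval all of whose cells belong to $\mathcal{P}$. A cell interval of $\mathcal{P}$ is a set of cells of $\mathcal{P}$ whose lower left corners form the points of an interval $[(i,j),(k,l)]$ with $i=k$ or $j=l$ (vertical or horizontal). Two rooks placed in cells of $\mathcal{P}$ are non-attacking if they do not lie in a common horizontal or vertical cell interval contained in $\mathcal{P}$; a $k$-rook configuration is a set of $k$ pairwise non-attacking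 rooks in cells of $\mathcal{P}$, and $r(\mathcal{P})$ is the maximum such $k$. Two non-attacking rooks are switching if they occupy cells $A,B$ with lower left corners $(i,j),(k,l)$, $i\ne k$, $j\neq l$, such that all cells of the inner interval spanned by $A$ and $B$ lie in $\mathcal{P}$ (i.e. $A,B$ are diagonal or anti-diagonal cells of a rectangle of $\mathcal{P}$); a switch replaces them by rooks in the cells with lower left corners $(i,l)$ and $(k,j)$. Two $k$-rook configurations are equivalent if one is obtained from the other by a finite sequence of switches. If $\tilde r_k$ is the number of equivalence classes of $k$-rook configurations ($\tilde r_0=1$), the switching rook polynomial of $\mathcal{P}$ is $\tilde r_{\mathcal{P}}(t)=\sum_{k=0}^{r(\mathcal{P})}\tilde r_k t^k$. *)

(* Defs.v *)
From HB Require Import structures.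
From mathcomp Require Import all_boot all_order all_algebra.
From mathcomp Require Import finmap.
From mathcomp Require Import boolp.
From Stdlib Require Import Relations.
Set Implicit Arguments. Unset Strict Implicit. Unset Printing Implicit Defensive.
Import Order.TTheory GRing.Theory Num.Theory.
Local Open Scope fset_scope.
Local Open Scope ring_scope.

(* A cell is identified with its lower left corner a; the cell is [a, a+(1,1)]. *)
Definition cell := (int * int)%type.

Definition share_vertex (A B : cell) : bool :=
  (`|A.1 - B.1| <= 1) && (`|A.2 - B.2| <= 1).

Definition share_edge (A B : cell) : bool :=
  ((A.1 == B.1) && (`|A.2 - B.2| == 1)) || ((A.2 == B.2) && (`|A.1 - B.1| == 1)).

Definition weakly_connected (P : {fset cell}) : Prop :=
  forall A B, A \in P -> B \in P ->
    exists s : seq cell, [/\ all (fun C => C \in P) s,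
                             path share_vertex A s & last A s = B].

Definition collection (P : {fset cell}) : Prop :=
  P != fset0 /\ weakly_connected P.

Definition polyomino (P : {fset cell}) : Prop :=
  collection P /\
  forall A B, A \in P -> B \in P ->
    exists s : seq cell, [/\ all (fun C => C \in P) s, uniq (A :: s),
                             path share_edge A s & last A s = B].

Definition connected_component (P Q : {fset cell}) : Prop :=
  [/\ Q `<=` P, polyomino Q &
      forall Q' : {fset cell}, Q `<=` Q' -> Q' `<=` P -> polyomino Q' -> Q' = Q].

Definition row_interval_in (P : {fset cell}) (j a b : int) : Prop :=
  forall x : int, Num.min a b <= x <= Num.max a b -> (x, j) \in P.

Definition col_interval_in (P : {fset cell}) (i a b : int) : Prop :=
  forall y : int, Num.min a b <= y <= Num.max a b -> (i, y) \in P.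

Definition attacking (P : {fset cell}) (A B : cell) : Prop :=
  (A.2 = B.2 /\ row_interval_in P A.2 A.1 B.1) \/
  (A.1 = B.1 /\ col_interval_in P A.1 A.2 B.2).

Definition rook_config (P C : {fset cell}) : Prop :=
  C `<=` P /\ forall A B, A \in C -> B \in C -> A != B -> ~ attacking P A B.

Definition rect_in (P : {fset cell}) (A B : cell) : Prop :=
  forall x y : int,
    Num.min A.1 B.1 <= x <= Num.max A.1 B.1 ->
    Num.min A.2 B.2 <= y <= Num.max A.2 B.2 -> (x, y) \in P.

Definition switch_step (P : {fset cell}) (C C' : {fset cell}) : Prop :=
  exists A B : cell,
    [/\ A \in C, B \in C, (A.1 != B.1) && (A.2 != B.2), rect_in P A B &
        C' = ((C `\ A) `\ B) `|` [fset (A.1, B.2); (B.1, A.2)]].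

Definition switch_equiv (P : {fset cell}) : {fset cell} -> {fset cell} -> Prop :=
  clos_refl_trans _ (switch_step P).

Definition rook_configs (P : {fset cell}) (k : nat) : {fset {fset cell}} :=
  [fset C in fpowerset P | `[< rook_config P C >] && (#|` C| == k)%N].

Definition rook_number (P : {fset cell}) : nat :=
  \max_(k < (#|` P|).+1 | rook_configs P k != fset0) k.

Definition switch_class (P : {fset cell}) (k : nat) (C : {fset cell}) :
  {fset {fset cell}} :=
  [fset D in rook_configs P k | `[< switch_equiv P C D >]].

Definition switch_rook_count (P : {fset cell}) (k : nat) : nat :=
  #|` [fset S in fpowerset (rook_configs P k) |
        `[< exists2 C, C \in rook_configs P k & S = switch_class P k C >]] |.

Definition switching_rook_poly (P : {fset cell}) : {poly int} :=
  \sum_(k < (rook_number P).+1) (switch_rook_count P k)%:R *: 'X^k.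

(* Main.v *)
Require Import Defs.
From HB Require Import structures.
From mathcomp Require Import all_boot all_order all_algebra.
From mathcomp Require Import finmap boolp zify.
From Stdlib Require Import Relations.
Set Implicit Arguments. Unset Strict Implicit. Unset Printing Implicit Defensive.
Import Order.TTheory GRing.Theory Num.Theory.
Section Aux.
Local Open Scope fset_scope.
Local Open Scope ring_scope.

Definition sep (P1 P2 : {fset cell}) :=
  forall A B, A \in P1 -> B \in P2 -> (A != B) && ~~ share_edge A B.

Lemma share_edgeC A B : share_edge A B = share_edge B A.
Proof. rewrite /share_edge !(eq_sym A.1) !(eq_sym A.2) distrC (distrC A.1 _) //. Qed.

Lemma sepC P1 P2 : sep P1 P2 -> sep P2 P1.
Proof. by move=> h A B hA hB; rewrite eq_sym share_edgeC; apply: h. Qed.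

Lemma sep_step P1 P2 a b : sep P1 P2 -> a \in P1 -> b \in P1 `|` P2 ->
  share_edge a b -> b \in P1.
Proof.
move=> h ha; rewrite in_fsetU => /orP[//|hb] e.
by move: (h _ _ ha hb); rewrite e andbF.
Qed.

Lemma line_prop (P1 P2 : {fset cell}) (f : int -> cell) (lo hi x y : int) :
  sep P1 P2 -> (forall z, share_edge (f z) (f (z+1))) ->
  (forall z, lo <= z <= hi -> f z \in P1 `|` P2) ->
  lo <= x <= hi -> lo <= y <= hi -> f x \in P1 -> f y \in P1.
Proof.
move=> hs he hin hx hy hfx.
have up : forall n : nat, x + n%:Z <= hi -> f (x + n%:Z) \in P1.
  elim=> [|n IH] hn; first by rewrite addr0.
  have e : x + n.+1%:Z = (x + n%:Z) + 1 by lia.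
  rewrite e; apply: (sep_step hs (IH _)); [lia| |exact: he].
  apply: hin; lia.
have down : forall n : nat, lo <= x - n%:Z -> f (x - n%:Z) \in P1.
  elim=> [|n IH] hn; first by rewrite subr0.
  have e : x - n%:Z = (x - n.+1%:Z) + 1 by lia.
  apply: (sep_step hs (IH _)); [lia| |]. apply: hin; lia.
  by rewrite share_edgeC e.
case: (lerP x y) => hxy.
  have -> : y = x + (absz (y - x))%:Z by lia.
  apply: up; lia.
have -> : y = x - (absz (x - y))%:Z by lia.
apply: down; lia.
Qed.

Lemma mm_l (a b : int) : Num.min a b <= a <= Num.max a b.
Proof. lia. Qed.
Lemma mm_r (a b : int) : Num.min a b <= b <= Num.max a b.
Proof. lia. Qed.

Lemma row_edge j z : share_edge (z, j) (z + 1, j).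
Proof. rewrite /share_edge /= eqxx /=. apply/orP; right. lia. Qed.
Lemma col_edge i z : share_edge (i, z) (i, z + 1).
Proof. rewrite /share_edge /= eqxx /=. apply/orP; left. lia. Qed.

Lemma attacking_split P1 P2 A B : sep P1 P2 -> A \in P1 ->
  attacking (P1 `|` P2) A B -> attacking P1 A B /\ B \in P1.
Proof.
move=> hs hA [[e2 hr]|[e1 hc]].
- have H : forall x, Num.min A.1 B.1 <= x <= Num.max A.1 B.1 -> (x, A.2) \in P1.
    move=> x hx.
    apply: (@line_prop _ P2 (fun z => (z, A.2)) (Num.min A.1 B.1) (Num.max A.1 B.1) (A.1) _ hs) => //.
    + move=> z /=; apply: row_edge.
    + lia.
    + by case: (A) hA.
  split; first by left; split.
  have -> : B = (B.1, A.2) by rewrite e2; case: (B).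
  apply: H; lia.
- have H : forall y, Num.min A.2 B.2 <= y <= Num.max A.2 B.2 -> (A.1, y) \in P1.
    move=> y hy.
    apply: (@line_prop _ P2 (fun z => (A.1, z)) (Num.min A.2 B.2) (Num.max A.2 B.2) (A.2) _ hs) => //.
    + move=> z /=; apply: col_edge.
    + lia.
    + by case: (A) hA.
  split; first by right; split.
  have -> : B = (A.1, B.2) by rewrite e1; case: (B).
  apply: H; lia.
Qed.

Lemma attacking_mono P1 P A B : P1 `<=` P -> attacking P1 A B -> attacking P A B.
Proof.
move=> /fsubsetP hs [[e hr]|[e hc]]; [left|right]; split=> // z hz; apply: hs; auto.
Qed.

Lemma rect_split P1 P2 A B : sep P1 P2 -> A \in P1 ->
  rect_in (P1 `|` P2) A B -> rect_in P1 A B.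
Proof.
move=> hs hA hr x y hx hy.
have hrow : (x, A.2) \in P1.
  apply: (@line_prop _ P2 (fun z => (z, A.2)) (Num.min A.1 B.1) (Num.max A.1 B.1) (A.1) _ hs) => //.
  + move=> z /=; apply: row_edge.
  + move=> z hz; apply: hr; [exact: hz | exact: mm_l].
  + lia.
  + by case: (A) hA.
apply: (@line_prop _ P2 (fun z => (x, z)) (Num.min A.2 B.2) (Num.max A.2 B.2) (A.2) _ hs) => //.
+ move=> z /=; apply: col_edge.
+ move=> z hz; apply: hr => //.
+ lia.
Qed.

Lemma rect_mono P1 P A B : P1 `<=` P -> rect_in P1 A B -> rect_in P A B.
Proof. by move=> /fsubsetP hs hr x y hx hy; apply: hs; apply: hr. Qed.

Lemma rect_corners P A B : rect_in P A B ->
  [/\ A \in P, B \in P, (A.1, B.2) \in P & (B.1, A.2) \in P].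
Proof.
move=> hr; split.
- have -> : A = (A.1, A.2) by case: (A).
  apply: hr; lia.
- have -> : B = (B.1, B.2) by case: (B).
  apply: hr; lia.
- apply: hr; lia.
- apply: hr; lia.
Qed.

End Aux.

Section Aux2.
Local Open Scope fset_scope.

Lemma sep_neq P1 P2 a b : sep P1 P2 -> a \in P1 -> b \in P2 -> a != b.
Proof. by move=> h ha hb; case/andP: (h _ _ ha hb). Qed.

Lemma sep_notin P1 P2 a : sep P1 P2 -> a \in P1 -> a \notin P2.
Proof. by move=> h ha; apply/negP => hb; move: (sep_neq h ha hb); rewrite eqxx. Qed.

Lemma split_set P1 P2 (C : {fset cell}) : C `<=` P1 `|` P2 ->
  C = (C `&` P1) `|` (C `&` P2).
Proof.
move=> /fsubsetP hC; apply/fsetP => z; rewrite !inE.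
case hz: (z \in C) => //=; move: (hC _ hz); by rewrite !inE => ->.
Qed.

Lemma rook_config_split P1 P2 C : sep P1 P2 -> C `<=` P1 `|` P2 ->
  rook_config (P1 `|` P2) C <-> rook_config P1 (C `&` P1) /\ rook_config P2 (C `&` P2).
Proof.
move=> hs hC; have hs' := sepC hs; split.
- case=> _ h; split; split; try by apply: fsubsetIr.
  + move=> A B; rewrite !inE => /andP[hA _] /andP[hB _] hAB hat.
    by apply: (h A B hA hB hAB); apply: attacking_mono hat; apply: fsubsetUl.
  + move=> A B; rewrite !inE => /andP[hA _] /andP[hB _] hAB hat.
    by apply: (h A B hA hB hAB); apply: attacking_mono hat; apply: fsubsetUr.
- case=> [[_ h1] [_ h2]]; split => // A B hA hB hAB hat.
  have := fsubsetP hC _ hA; rewrite inE => /orP[hA1|hA2].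
  + have [hat1 hB1] := attacking_split hs hA1 hat.
    by apply: (h1 A B) => //; rewrite inE ?hA ?hB ?hA1 ?hB1.
  + rewrite fsetUC in hat.
    have [hat1 hB1] := attacking_split hs' hA2 hat.
    by apply: (h2 A B) => //; rewrite inE ?hA ?hB ?hA2 ?hB1.
Qed.


Lemma step_split1 P1 P2 X X' (A B : cell) : sep P1 P2 -> X `<=` P1 `|` P2 ->
  A \in X -> B \in X -> (A.1 != B.1) && (A.2 != B.2) -> rect_in (P1 `|` P2) A B ->
  A \in P1 ->
  X' = ((X `\ A) `\ B) `|` [fset (A.1, B.2); (B.1, A.2)] ->
  [/\ X' `<=` P1 `|` P2, switch_step P1 (X `&` P1) (X' `&` P1) & X `&` P2 = X' `&` P2].
Proof.
move=> hs hX hA hB hne hr hA1 ->.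
have hr1 := rect_split hs hA1 hr.
have [cA cB cAB cBA] := rect_corners hr1.
split.
- apply/fsubsetP => z; rewrite !inE => /orP[/andP[_ /andP[_ hz]]|/orP[/eqP->|/eqP->]].
  + by have := fsubsetP hX _ hz; rewrite inE.
  + by rewrite cAB.
  + by rewrite cBA.
- exists A, B; split => //; try by rewrite inE ?hA ?hB ?hA1 ?(rect_corners hr1).
  apply/fsetP => z; rewrite !inE.
  have [->|nA'] := eqVneq z (A.1, B.2); first by rewrite cAB !orbT.
  have [->|nB'] := eqVneq z (B.1, A.2); first by rewrite cBA !orbT.
  rewrite !orbF; case: (z \in X); case: (z \in P1); by rewrite ?andbF ?andbT.
- apply/fsetP => z; rewrite !inE.
  case hz2: (z \in P2); rewrite ?andbF // !andbT.
  have nz : forall c, c \in P1 -> (z == c) = false.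
    by move=> c hc; apply/negbTE; rewrite eq_sym (sep_neq hs hc hz2).
  by rewrite (nz _ cA) (nz _ cB) (nz _ cAB) (nz _ cBA) /= !orbF.
Qed.

Lemma step_split P1 P2 X X' : sep P1 P2 -> X `<=` P1 `|` P2 ->
  switch_step (P1 `|` P2) X X' ->
  X' `<=` P1 `|` P2 /\
  ((switch_step P1 (X `&` P1) (X' `&` P1) /\ X `&` P2 = X' `&` P2) \/
   (switch_step P2 (X `&` P2) (X' `&` P2) /\ X `&` P1 = X' `&` P1)).
Proof.
move=> hs hX [A [B [hA hB hne hr eX']]].
have := fsubsetP hX _ hA; rewrite inE => /orP[hA1|hA2].
- by have [? ? ?] := step_split1 hs hX hA hB hne hr hA1 eX'; split=> //; left.
- rewrite fsetUC in hX hr.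
  have [? ? ?] := step_split1 (sepC hs) hX hA hB hne hr hA2 eX'.
  by split; [rewrite fsetUC | right].
Qed.

Lemma equiv_split_l P1 P2 X Y : sep P1 P2 -> switch_equiv (P1 `|` P2) X Y ->
  X `<=` P1 `|` P2 ->
  [/\ Y `<=` P1 `|` P2, switch_equiv P1 (X `&` P1) (Y `&` P1) &
      switch_equiv P2 (X `&` P2) (Y `&` P2)].
Proof.
move=> hs; elim=> {X Y}.
- move=> X Y hst hX; have [hY [[h1 h2]|[h1 h2]]] := step_split hs hX hst.
  + by split=> //; [apply: rt_step | rewrite h2; apply: rt_refl].
  + by split=> //; [rewrite h2; apply: rt_refl | apply: rt_step].
- by move=> X hX; split=> //; apply: rt_refl.
- move=> X Y Z _ IH1 _ IH2 hX.
  have [hY a1 a2] := IH1 hX; have [hZ b1 b2] := IH2 hY.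
  by split=> //; apply: rt_trans; eauto.
Qed.

Lemma lift_step P1 P2 X1 Y1 Z : sep P1 P2 -> X1 `<=` P1 -> Z `<=` P2 ->
  switch_step P1 X1 Y1 ->
  switch_step (P1 `|` P2) (X1 `|` Z) (Y1 `|` Z) /\ Y1 `<=` P1.
Proof.
move=> hs hX hZ [A [B [hA hB hne hr ->]]].
have [cA cB cAB cBA] := rect_corners hr.
split.
- exists A, B; split => //; rewrite ?inE ?hA ?hB //.
    by apply: rect_mono hr; apply: fsubsetUl.
  apply/fsetP => z; rewrite !inE.
  case hzZ: (z \in Z); rewrite ?orbT ?orbF //.
  have hz2 := fsubsetP hZ _ hzZ.
  have nz : forall c, c \in P1 -> (z == c) = false.
    by move=> c hc; apply/negbTE; rewrite eq_sym (sep_neq hs hc hz2).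
  by rewrite !nz ?orbT // (fsubsetP hX).
- apply/fsubsetP => z; rewrite !inE => /orP[/andP[_ /andP[_ hz]]|/orP[/eqP->|/eqP->]] //.
  exact: (fsubsetP hX).
Qed.

Lemma lift_equiv P1 P2 X1 Y1 Z : sep P1 P2 -> Z `<=` P2 ->
  switch_equiv P1 X1 Y1 -> X1 `<=` P1 ->
  switch_equiv (P1 `|` P2) (X1 `|` Z) (Y1 `|` Z) /\ Y1 `<=` P1.
Proof.
move=> hs hZ; elim=> {X1 Y1}.
- move=> X Y hst hX; have [? ?] := lift_step hs hX hZ hst.
  by split=> //; apply: rt_step.
- by move=> X hX; split=> //; apply: rt_refl.
- move=> X Y W _ IH1 _ IH2 hX.
  have [a1 hY] := IH1 hX; have [b1 hW] := IH2 hY.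
  by split=> //; apply: rt_trans; eauto.
Qed.

Lemma equiv_split P1 P2 C D : sep P1 P2 -> C `<=` P1 `|` P2 -> D `<=` P1 `|` P2 ->
  switch_equiv (P1 `|` P2) C D <->
  switch_equiv P1 (C `&` P1) (D `&` P1) /\ switch_equiv P2 (C `&` P2) (D `&` P2).
Proof.
move=> hs hC hD; split.
- by move=> h; have [_ ? ?] := equiv_split_l hs h hC.
- case=> h1 h2.
  rewrite (split_set hC) (split_set hD).
  apply: (@rt_trans _ _ _ ((D `&` P1) `|` (C `&` P2))).
  + by have [] := @lift_equiv P1 P2 (C `&` P1) (D `&` P1) (C `&` P2) hs
         (fsubsetIr _ _) h1 (fsubsetIr _ _).
  + have [] := @lift_equiv P2 P1 (C `&` P2) (D `&` P2) (D `&` P1) (sepC hs)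
         (fsubsetIr _ _) h2 (fsubsetIr _ _).
    by rewrite fsetUC (fsetUC (C `&` P2)) (fsetUC (D `&` P2)).
Qed.

Lemma step_card P X X' : switch_step P X X' -> #|` X'| <= #|` X|.
Proof.
move=> [A [B [hA hB /andP[n1 _] _ ->]]].
have nAB : A != B by apply: contraNneq n1 => ->.
have e1 := cardfsD1 A X; have e2 := cardfsD1 B (X `\ A).
rewrite hA add1n in e1; rewrite !inE hB eq_sym nAB /= in e2.
have e3 := cardfsUI ((X `\ A) `\ B) [fset (A.1, B.2); (B.1, A.2)].
have e4 : #|` [fset (A.1, B.2); (B.1, A.2)]| <= 2 by rewrite cardfs2; case: (_ != _).
have h := leq_addr #|` (X `\ A `\ B) `&` [fset (A.1, B.2); (B.1, A.2)]|
   #|` X `\ A `\ B `|` [fset (A.1, B.2); (B.1, A.2)]|.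
rewrite e3 in h; apply: leq_trans h _; rewrite e1 e2.
rewrite add1n -addn2 leq_add2l; exact: e4.
Qed.

Lemma equiv_card P X Y : switch_equiv P X Y -> #|` Y| <= #|` X|.
Proof.
elim=> {X Y}; first exact: step_card.
- by [].
- by move=> X Y Z _ h1 _ h2; apply: leq_trans h1.
Qed.

End Aux2.

Section Aux3.
Local Open Scope fset_scope.

Lemma sumn_iota (F : nat -> nat) n : sumn [seq F i | i <- iota 0 n] = \sum_(i < n) F i.
Proof. rewrite sumnE big_map -(big_mkord xpredT) /index_iota subn0 //. Qed.

Lemma in_configs P k C :
  (C \in rook_configs P k) = [&& C `<=` P, `[< rook_config P C >] & #|` C| == k].
Proof. by rewrite /rook_configs in_fset !inE /= fpowersetE. Qed.

Lemma in_class P k C E : (E \in switch_class P k C) =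
  (E \in rook_configs P k) && `[< switch_equiv P C E >].
Proof. by rewrite /switch_class in_fset !inE. Qed.

Lemma count_img P k : switch_rook_count P k =
  #|` [fset switch_class P k C | C in rook_configs P k]|.
Proof.
rewrite /switch_rook_count; apply: (congr1 (fun A : {fset _} => #|` A|)); apply/fsetP => S.
rewrite in_fset !inE /= fpowersetE; apply/andP/imfsetP.
- by case=> _ /asboolP [C hC ->]; exists C.
- case=> C hC ->; split; last by apply/asboolP; exists C.
  by apply/fsubsetP => D; rewrite in_class => /andP[].
Qed.

Lemma undup_map_size (T U V : eqType) (f : T -> U) (g : T -> V) (s : seq T) :
  {in s &, forall x y, (f x == f y) = (g x == g y)} ->
  size (undup (map f s)) = size (undup (map g s)).
Proof.
elim: s => [//|x s IH] h /=.
have h' : {in s &, forall x y, (f x == f y) = (g x == g y)}.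
  by move=> a b ha hb; apply: h; rewrite inE ?ha ?hb orbT.
have e : (f x \in map f s) = (g x \in map g s).
  apply/mapP/mapP => -[y hy ey]; exists y => //; apply/eqP.
  - by rewrite -h ?inE ?eqxx ?hy ?orbT // ey.
  - by rewrite h ?inE ?eqxx ?hy ?orbT // ey.
by rewrite e; case: (g x \in map g s) => /=; rewrite IH.
Qed.

Lemma card_imfset_seq (T U : choiceType) (f : T -> U) (A : {fset T}) :
  #|` [fset f x | x in A]| = size (undup (map f A)).
Proof.
rewrite -card_fseq; apply: (congr1 (fun A : {fset _} => #|` A|)); apply/fsetP => y.
rewrite in_fset /=; apply/imfsetP/mapP => -[x hx ->]; by exists x.
Qed.

Lemma card_img_eq (T U V : choiceType) (f : T -> U) (g : T -> V) (A : {fset T}) :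
  {in A &, forall x y, (f x == f y) = (g x == g y)} ->
  #|` [fset f x | x in A]| = #|` [fset g x | x in A]|.
Proof. by move=> h; rewrite !card_imfset_seq; apply: undup_map_size. Qed.

Lemma class_eq P k C D : C \in rook_configs P k -> D \in rook_configs P k ->
  (switch_class P k C == switch_class P k D) =
  `[< switch_equiv P C D /\ switch_equiv P D C >].
Proof.
move=> hC hD; apply/eqP/asboolP.
- move=> e; split.
  + have : D \in switch_class P k D.
      by rewrite in_class hD; apply/asboolP; apply: rt_refl.
    by rewrite -e in_class => /andP[_ /asboolP].
  + have : C \in switch_class P k C.
      by rewrite in_class hC; apply/asboolP; apply: rt_refl.
    by rewrite e in_class => /andP[_ /asboolP].
- case=> h1 h2; apply/fsetP => E; rewrite !in_class.
  case: (E \in rook_configs P k) => //=; apply/asboolP/asboolP => h.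
  + exact: rt_trans h2 h.
  + exact: rt_trans h1 h.
Qed.

Lemma configs_big P k : #|` P| < k -> rook_configs P k = fset0.
Proof.
move=> hk; apply/fsetP => C; rewrite in_configs inE.
apply/negbTE; apply/negP => /and3P[hs _ /eqP hc].
by move: (fsubset_leq_card hs); rewrite hc leqNgt hk.
Qed.

Lemma coef_srp P k : ((switching_rook_poly P)`_k = (switch_rook_count P k)%:R)%R.
Proof.
rewrite (_ : switching_rook_poly P =
  \poly_(i < (rook_number P).+1) (switch_rook_count P i)%:R)%R; last first.
  by rewrite poly_def.
rewrite coef_poly.
case: ltnP => // hk.
case e: (rook_configs P k == fset0).
  by rewrite count_img (eqP e) imfset0 cardfs0.
exfalso; move/negbT: e => e.
have : exists C, C \in rook_configs P k by apply/fset0Pn.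
case=> C; rewrite in_configs => /and3P[hs _ /eqP hc].
have hk' : k < (#|` P|).+1 by rewrite ltnS -hc fsubset_leq_card.
have := @leq_bigmax_cond _ (fun i : 'I_(#|` P|).+1 => rook_configs P i != fset0)
   (fun i => nat_of_ord i) (Ordinal hk') e.
by rewrite /= -/(rook_number P) leqNgt hk.
Qed.

End Aux3.

Section Aux4.
Local Open Scope fset_scope.
Local Open Scope nat_scope.

Variables P1 P2 : {fset cell}.
Hypothesis hs : sep P1 P2.

Lemma card_split C : C `<=` P1 `|` P2 -> #|` C| = #|` C `&` P1| + #|` C `&` P2|.
Proof.
move=> hC; have := cardfsUI (C `&` P1) (C `&` P2).
rewrite -(split_set hC).
have -> : (C `&` P1) `&` (C `&` P2) = fset0.
  apply/fsetP => z; rewrite !inE; apply/negbTE.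
  apply/negP => /andP[/andP[_ h1] /andP[_ h2]]; by move: (sep_notin hs h1); rewrite h2.
by rewrite cardfs0 addn0.
Qed.

Lemma config_split C k : C \in rook_configs (P1 `|` P2) k ->
  [/\ C `&` P1 \in rook_configs P1 #|` C `&` P1|,
      C `&` P2 \in rook_configs P2 (k - #|` C `&` P1|) & #|` C `&` P1| <= k].
Proof.
rewrite in_configs => /and3P[hC /asboolP hr /eqP hk].
have [r1 r2] := (rook_config_split hs hC).1 hr.
have hk' := card_split hC.
rewrite !in_configs !fsubsetIr /=; split.
- by rewrite eqxx andbT; apply/asboolP.
- by apply/andP; split; [apply/asboolP | apply/eqP; rewrite -hk hk' addKn].
- by rewrite -hk hk' leq_addr.
Qed.

Lemma config_join C1 C2 k1 k2 : C1 \in rook_configs P1 k1 -> C2 \in rook_configs P2 k2 ->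
  [/\ C1 `|` C2 \in rook_configs (P1 `|` P2) (k1 + k2),
      (C1 `|` C2) `&` P1 = C1 & (C1 `|` C2) `&` P2 = C2].
Proof.
rewrite !in_configs => /and3P[h1 /asboolP r1 /eqP e1] /and3P[h2 /asboolP r2 /eqP e2].
have E1 : (C1 `|` C2) `&` P1 = C1.
  apply/fsetP => z; rewrite !inE.
  case hz1: (z \in C1); first by rewrite (fsubsetP h1).
  case hz2: (z \in C2) => //=; apply/negbTE; apply: (sep_notin (sepC hs)).
  exact: (fsubsetP h2).
have E2 : (C1 `|` C2) `&` P2 = C2.
  apply/fsetP => z; rewrite !inE.
  case hz2: (z \in C2); first by rewrite orbT (fsubsetP h2).
  case hz1: (z \in C1) => //=; apply/negbTE; apply: (sep_notin hs).
  exact: (fsubsetP h1).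
have hC : C1 `|` C2 `<=` P1 `|` P2 by apply: fsetUSS.
split=> //.
rewrite hC /=; apply/andP; split.
  by apply/asboolP; apply/(rook_config_split hs hC); rewrite E1 E2.
by rewrite (card_split hC) E1 E2 e1 e2.
Qed.

Definition gmap k (C : {fset cell}) :
  nat * ({fset {fset cell}} * {fset {fset cell}}) :=
  (#|` C `&` P1|, (switch_class P1 #|` C `&` P1| (C `&` P1),
                   switch_class P2 (k - #|` C `&` P1|) (C `&` P2))).

Lemma gmap_eq k C D : C \in rook_configs (P1 `|` P2) k ->
  D \in rook_configs (P1 `|` P2) k ->
  (switch_class (P1 `|` P2) k C == switch_class (P1 `|` P2) k D) = (gmap k C == gmap k D).
Proof.
move=> hC hD; rewrite class_eq // /gmap !xpair_eqE.
have [c1 c2 ck] := config_split hC; have [d1 d2 dk] := config_split hD.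
have sC : C `<=` P1 `|` P2 by move: hC; rewrite in_configs => /and3P[].
have sD : D `<=` P1 `|` P2 by move: hD; rewrite in_configs => /and3P[].
apply/asboolP/idP.
- case=> /(equiv_split hs sC sD) [a1 a2] /(equiv_split hs sD sC) [b1 b2].
  have e : #|` C `&` P1| = #|` D `&` P1|.
    by apply/eqP; rewrite eqn_leq (equiv_card b1) (equiv_card a1).
  rewrite e eqxx /=; rewrite e in c1 c2.
  by rewrite !class_eq //; apply/andP; split; apply/asboolP.
- case/and3P => /eqP e q1 q2; rewrite -e in d1 d2 q1 q2.
  move: q1 q2; rewrite !class_eq // => /asboolP[a1 b1] /asboolP[a2 b2].
  by split; apply/(equiv_split hs) => //.
Qed.

Lemma count_two k : switch_rook_count (P1 `|` P2) k =
  \sum_(i < k.+1) switch_rook_count P1 i * switch_rook_count P2 (k - i).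
Proof.
rewrite count_img (@card_img_eq _ _ _ _ (gmap k)); last first.
  by move=> C D hC hD; apply: gmap_eq.
pose S1 i := [fset switch_class P1 i C | C in rook_configs P1 i].
pose S2 i := [fset switch_class P2 i C | C in rook_configs P2 i].
pose inner i := [seq (c1, c2) | c1 <- enum_fset (S1 i), c2 <- enum_fset (S2 (k - i))].
pose t := [seq (i, c) | i <- iota 0 k.+1, c <- inner i].
have ut : uniq t.
  apply: allpairs_uniq_dep; first exact: iota_uniq.
    move=> i _; apply: allpairs_uniq; try exact: fset_uniq.
    by move=> [a b] [a' b'] _ _ /= [-> ->].
  by move=> [i c] [i' c'] _ _ /= [-> ->].
have mt : forall i c1 c2, ((i, (c1, c2)) \in t) =
    [&& i <= k, c1 \in S1 i & c2 \in S2 (k - i)].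
  move=> i c1 c2; apply/allpairsPdep/and3P.
  - case=> j [c [hj hc e]]; case: e => ej ec; subst j c.
    move: hc => /allpairsP [[a b] [ha hb /= [ea eb]]]; subst a b.
    by split=> //; move: hj; rewrite mem_iota add0n ltnS.
  - case=> hi h1 h2; exists i, (c1, c2); split=> //.
      by rewrite mem_iota add0n ltnS.
    by apply/allpairsP; exists (c1, c2).
have -> : [fset gmap k C | C in rook_configs (P1 `|` P2) k] = [fset x in t].
  apply/fsetP => -[i [c1 c2]]; rewrite in_fset /= mt.
  apply/imfsetP/and3P.
  - case=> C hC [-> -> ->]; have [h1 h2 hk] := config_split hC.
    split=> //; apply/imfsetP.
    + by exists (C `&` P1).
    + by exists (C `&` P2).
  - case=> hi /imfsetP [C1 hC1 ->] /imfsetP [C2 hC2 ->].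
    have [hj E1 E2] := config_join hC1 hC2.
    rewrite subnKC // in hj.
    exists (C1 `|` C2) => //; rewrite /gmap E1 E2.
    have -> : #|` C1| = i by move: hC1; rewrite in_configs => /and3P[_ _ /eqP].
    by [].
rewrite card_fseq undup_id // size_allpairs_dep.
rewrite (eq_map (g := fun i => switch_rook_count P1 i * switch_rook_count P2 (k - i))).
  by rewrite sumn_iota.
by move=> i; rewrite size_allpairs !count_img.
Qed.

End Aux4.

Section Aux5.
Local Open Scope fset_scope.

Lemma poly_two P1 P2 : sep P1 P2 ->
  switching_rook_poly (P1 `|` P2) = (switching_rook_poly P1 * switching_rook_poly P2)%R.
Proof.
move=> hs; apply/polyP => k; rewrite coefM !coef_srp (count_two hs) natr_sum.
by apply: eq_bigr => i _; rewrite natrM !coef_srp.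
Qed.

Lemma poly_empty : switching_rook_poly fset0 = 1%R.
Proof.
apply/polyP => k; rewrite coef_srp coef1.
case: k => [|k] /=.
- rewrite count_img.
  have -> : rook_configs fset0 0 = [fset fset0].
    apply/fsetP => C; rewrite in_configs inE fsubset0.
    case e: (C == fset0) => //=; rewrite (eqP e) cardfs0 eqxx andbT.
    by apply/asboolP; split=> // A B; rewrite inE.
  have -> : [fset switch_class fset0 0 C | C in [fset fset0]] =
            [fset switch_class fset0 0 fset0].
    apply/fsetP => S; rewrite inE; apply/imfsetP/eqP.
    + by case=> C; rewrite inE => /eqP ->.
    + by move=> ->; exists fset0; rewrite ?inE.
  by rewrite cardfs1.
- by rewrite count_img configs_big ?imfset0 ?cardfs0 //.
Qed.

Definition bigU (Ps : seq {fset cell}) := foldr (fun Q U => Q `|` U) fset0 Ps.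

Lemma in_bigU Ps z : z \in bigU Ps <-> exists2 Q, Q \in Ps & z \in Q.
Proof.
elim: Ps => [|Q Ps IH] /=; first by rewrite inE; split=> // -[].
rewrite inE; split.
- case/orP => [hz|/IH [Q' h1 h2]]; first by exists Q; rewrite ?inE ?eqxx.
  by exists Q'; rewrite // inE h1 orbT.
- case=> Q'; rewrite inE => /orP[/eqP -> ->//|h1 h2].
  by apply/orP; right; apply/IH; exists Q'.
Qed.

Lemma sep_bigU Q Ps : (forall Q', Q' \in Ps -> sep Q Q') -> sep Q (bigU Ps).
Proof.
move=> h A B hA /in_bigU [Q' hQ' hB].
exact: (h Q' hQ').
Qed.

Lemma prod_bigU Ps : uniq Ps ->
  (forall Q Q', Q \in Ps -> Q' \in Ps -> Q != Q' -> sep Q Q') ->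
  (\prod_(Q <- Ps) switching_rook_poly Q)%R = switching_rook_poly (bigU Ps).
Proof.
elim: Ps => [|Q Ps IH] /=; first by rewrite big_nil poly_empty.
case/andP => hQ hu hsep; rewrite big_cons IH //.
- rewrite poly_two //; apply: sep_bigU => Q' hQ'; apply: hsep.
  + by rewrite inE eqxx.
  + by rewrite inE hQ' orbT.
  + by apply: contraNneq hQ => ->.
- by move=> A B hA hB; apply: hsep; rewrite inE ?hA ?hB orbT.
Qed.

Definition econn (X : {fset cell}) (A B : cell) :=
  exists s : seq cell, [/\ all (fun C => C \in X) s, path share_edge A s & last A s = B].

Lemma edge_vertex A B : share_edge A B -> share_vertex A B.
Proof. rewrite /share_edge /share_vertex; lia. Qed.

Lemma econn_trans X A B C : econn X A B -> econn X B C -> econn X A C.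
Proof.
move=> [s [h1 h2 h3]] [t [g1 g2 g3]]; exists (s ++ t).
by rewrite all_cat cat_path last_cat h1 h2 h3 g1 g2 g3.
Qed.

Lemma econn_mono X Y A B : X `<=` Y -> econn X A B -> econn Y A B.
Proof.
move=> /fsubsetP hs [s [h1 h2 h3]]; exists s; split=> //.
by apply/allP => z hz; apply: hs; move/allP: h1; apply.
Qed.

Lemma econn_edge X A B : B \in X -> share_edge A B -> econn X A B.
Proof. by move=> hB he; exists [:: B]; rewrite /= hB he. Qed.

Lemma econn_refl X A : econn X A A.
Proof. by exists [::]. Qed.

Lemma poly_of_econn X : X != fset0 -> (forall A B, A \in X -> B \in X -> econn X A B) ->
  polyomino X.
Proof.
move=> hX h; split; first split=> //.
- move=> A B hA hB; have [s [h1 h2 h3]] := h A B hA hB; exists s; split=> //.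
  by apply: sub_path h2 => x y; apply: edge_vertex.
- move=> A B hA hB; have [s [h1 h2 h3]] := h A B hA hB.
  rewrite -h3; case/shortenP: h2 => s' hp hu hsub; exists s'; split=> //.
  by apply/allP => z /hsub hz; move/allP: h1; apply.
Qed.

Lemma econn_of_poly X A B : polyomino X -> A \in X -> B \in X -> econn X A B.
Proof. by case=> _ h hA hB; have [s [? ? ? ?]] := h A B hA hB; exists s. Qed.

Lemma poly_union Q1 Q2 a b : polyomino Q1 -> polyomino Q2 -> a \in Q1 -> b \in Q2 ->
  (a == b) || share_edge a b -> polyomino (Q1 `|` Q2).
Proof.
move=> p1 p2 ha hb hab.
have s1 : Q1 `<=` Q1 `|` Q2 by apply: fsubsetUl.
have s2 : Q2 `<=` Q1 `|` Q2 by apply: fsubsetUr.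
have e12 : econn (Q1 `|` Q2) a b.
  case/orP: hab => [/eqP ->|he]; first exact: econn_refl.
  by apply: econn_edge => //; rewrite inE hb orbT.
have e21 : econn (Q1 `|` Q2) b a.
  case/orP: hab => [/eqP ->|he]; first exact: econn_refl.
  by apply: econn_edge; rewrite ?inE ?ha // share_edgeC.
apply: poly_of_econn.
  by apply/fset0Pn; exists a; rewrite inE ha.
move=> A B; rewrite !inE => /orP[hA|hA] /orP[hB|hB].
- by apply: econn_mono s1 _; apply: econn_of_poly.
- apply: econn_trans (econn_mono s1 (econn_of_poly p1 hA ha)) _.
  by apply: econn_trans e12 (econn_mono s2 (econn_of_poly p2 hb hB)).
- apply: econn_trans (econn_mono s2 (econn_of_poly p2 hA hb)) _.
  by apply: econn_trans e21 (econn_mono s1 (econn_of_poly p1 ha hB)).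
- by apply: econn_mono s2 _; apply: econn_of_poly.
Qed.

Lemma comp_sep P Q Q' : connected_component P Q -> connected_component P Q' ->
  Q != Q' -> sep Q Q'.
Proof.
move=> [sQ pQ mQ] [sQ' pQ' mQ'] ne A B hA hB.
apply/negPn/negP; rewrite negb_and !negbK => hab.
have pU := poly_union pQ pQ' hA hB hab.
have sU : Q `|` Q' `<=` P by rewrite fsubUset sQ sQ'.
have e1 := mQ _ (fsubsetUl _ _) sU pU.
have e2 := mQ' _ (fsubsetUr _ _) sU pU.
by move/eqP: ne; apply; rewrite -{1}e2 e1.
Qed.

Lemma exists_max (T : eqType) (s : seq T) (f : T -> nat) x0 : x0 \in s ->
  exists2 x, x \in s & forall y, y \in s -> f y <= f x.
Proof.
elim: s x0 => [//|a s IH] x0 _.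
case: s IH => [|b s] IH.
  by exists a; rewrite ?inE // => y; rewrite inE => /eqP ->.
have [x hx hm] := IH b (mem_head b s).
case: (leqP (f a) (f x)) => h.
- exists x; first by rewrite inE hx orbT.
  by move=> y; rewrite inE => /orP[/eqP ->|]; [|apply: hm].
- exists a; first by rewrite inE eqxx.
  move=> y; rewrite inE => /orP[/eqP ->//|hy].
  by apply: leq_trans (hm _ hy) (ltnW h).
Qed.

Lemma single_poly A : polyomino [fset A].
Proof.
apply: poly_of_econn; first by apply/fset0Pn; exists A; rewrite inE.
by move=> B C; rewrite !inE => /eqP -> /eqP ->; apply: econn_refl.
Qed.

Lemma comp_exists P A : A \in P -> exists Q, connected_component P Q /\ A \in Q.
Proof.
move=> hA.
pose F := [fset Q in fpowerset P | `[< polyomino Q >] && (A \in Q)].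
have inF : forall Q, (Q \in F) = [&& Q `<=` P, `[< polyomino Q >] & A \in Q].
  by move=> Q; rewrite /F in_fset !inE /= fpowersetE.
have h0 : [fset A] \in F.
  by rewrite inF fsub1set hA inE eqxx andbT; apply/asboolP; apply: single_poly.
have [Q hQ hm] := exists_max (fun Q : {fset cell} => #|` Q|) h0.
move: (hQ); rewrite inF => /and3P[sQ /asboolP pQ aQ].
exists Q; split=> //; split=> // Q' s1 s2 p'.
have hQ' : Q' \in F by rewrite inF s2 (fsubsetP s1 _ aQ) andbT; apply/asboolP.
apply/eqP; rewrite eq_sym eqEfcard s1 /=; exact: hm.
Qed.

End Aux5.

Theorem lemma1p1 (P : {fset cell}) (Ps : seq {fset cell}) :
  collection P ->
  uniq Ps ->
  (forall Q : {fset cell}, Q \in Ps <-> connected_component P Q) ->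
  (\prod_(Q <- Ps) switching_rook_poly Q)%R = switching_rook_poly P.
Proof.
move=> _ hu hPs.
rewrite prod_bigU //.
- congr switching_rook_poly; apply/fsetP => z; apply/idP/idP.
  + move/in_bigU => [Q hQ hz]; have [sQ _ _] := (hPs Q).1 hQ.
    exact: (fsubsetP sQ).
  + move=> hz; have [Q [cQ hzQ]] := comp_exists hz.
    by apply/in_bigU; exists Q => //; apply/hPs.
- by move=> Q Q' hQ hQ' ne; apply: comp_sep ne; apply/hPs.
Qed.
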